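(* Let $n,m\ge1$. If $\varphi\colon A\to B$ is a Frobenius $n$-homomorphism and $\gamma\colon A\to B$ is a Frobenius $m$-homomorphism, then $\varphi+\gamma$ is a Frobenius $(n+m)$-homomorphism; moreover $R_{\varphi+\gamma}(a,z)=R_\varphi(a,z)R_\gamma(a,z)$ for all $a\in A$.
   Context: $\mathbb{K}=\mathbb{R}$ or $\mathbb{C}$; $A$ and $B$ are commutative associative unital $\mathbb{K}$-algebras. For a $\mathbb{K}$-linear map $\varphi\colon A\to B$ and $a\in A$, the characteristic function is $R_\varphi(a,z)=\exp\bigl(\varphi(\ln(1+az))\bigr)\in B[[z]]$, with $\ln(1+az)=\sum_{k\ge1}(-1)^{k+1}a^kz^k/k$ and $\varphi$ applied coefficientwise. The Frobenius maps $\Phi_k\colon A^k\to B$ of $\varphi$ are defined by $\Phi_1=\varphi$ and $\Phi_{k+1}(a_1,\dots,a_{k+1})=\varphi(a_1)\Phi_k(a_2,\dots,a_{k+1})-\sum_{j=2}^{k+1}\Phi_k(a_2,\dots,a_{j-1},a_1a_j,a_{j+1},\dots,a_{k+1})$. A linear map $\varphi$ is a (Frobenius) $n$-homomorphism if $\varphi(1)=n\cdot1_B$ and $\Phi_k\equiv0$ for all $k\ge n+1$. *)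

(* Defs.v *)
From HB Require Import structures.
From mathcomp Require Import all_boot all_order all_algebra.
Set Implicit Arguments. Unset Strict Implicit. Unset Printing Implicit Defensive.
Import Order.TTheory GRing.Theory Num.Theory.
Local Open Scope ring_scope.

Section Frobenius.
Variables (K : numFieldType) (A B : comAlgType K).

(* Frobenius maps: frob phi k s is Phi_{k+1}(s) when size s = k+1.
   Phi_1 = phi;  Phi_{k+1}(a1, a2..a_{k+1}) = phi a1 * Phi_k(a2..)
     - sum_{j} Phi_k(a2.., a1*a_j, ..). *)
Fixpoint frob (phi : A -> B) (k : nat) (s : seq A) : B :=
  match k, s with
  | 0, a :: _ => phi a
  | k'.+1, a1 :: s' =>
      phi a1 * frob phi k' s'
      - \sum_(j < size s') frob phi k' (set_nth 0 s' j (a1 * nth 0 s' j))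
  | _, _ => 0
  end.

Definition FrobMap (phi : A -> B) (k : nat) (t : k.-tuple A) : B :=
  frob phi k.-1 t.

Definition is_nhom (n : nat) (phi : A -> B) : Prop :=
  linear phi /\ phi 1 = n%:R /\
  (forall (k : nat) (t : k.-tuple A), (n.+1 <= k)%N -> FrobMap phi t = 0).

Definition ps (R : Type) := nat -> R.

Definition ps_one (R : pzRingType) : ps R := fun n => if n == 0%N then 1 else 0.
Definition ps_mul (R : pzRingType) (f g : ps R) : ps R :=
  fun n => \sum_(i < n.+1) f i * g (n - i)%N.
Definition ps_pow (R : pzRingType) (f : ps R) (m : nat) : ps R :=
  iter m (ps_mul f) (ps_one R).

(* exp of a series with zero constant term: sum_m f^m / m! *)
Definition ps_exp (f : ps B) : ps B :=
  fun n => \sum_(m < n.+1) ((m`!)%:R : K)^-1 *: ps_pow f m n.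

(* ln(1 + a z) = sum_{k>=1} (-1)^(k+1) a^k z^k / k, in A[[z]] *)
Definition ln1p (a : A) : ps A :=
  fun k => if k == 0%N then 0
           else (((-1) ^+ k.+1 / k%:R : K) *: a ^+ k).

Definition charfun (phi : A -> B) (a : A) : ps B :=
  ps_exp (fun k => phi (ln1p a k)).

End Frobenius.

(* Main.v *)
Require Import Defs.
From HB Require Import structures.
From mathcomp Require Import all_boot all_order all_algebra.
Set Implicit Arguments. Unset Strict Implicit. Unset Printing Implicit Defensive.
Import Order.TTheory GRing.Theory Num.Theory.
Local Open Scope ring_scope.

Section Part1.
Variables (K : numFieldType) (A B : comAlgType K).

Fixpoint Fk (psi : A -> B) (k : nat) (s : seq A) : B :=
  match k, s with
  | 0, _ => 1
  | k'.+1, a :: s' => psi a * Fk psi k' s'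
      - \sum_(j < size s') Fk psi k' (set_nth 0 s' j (a * nth 0 s' j))
  | _, _ => 0
  end.

Definition F psi s := Fk psi (size s) s.

Lemma size_setn (s : seq A) (j : 'I_(size s)) x : size (set_nth 0 s j x) = size s.
Proof. by rewrite size_set_nth; apply/maxn_idPr; exact: ltn_ord. Qed.

Lemma F_nil psi : F psi [::] = 1. Proof. by []. Qed.

Lemma F_cons psi a s : F psi (a :: s) = psi a * F psi s
   - \sum_(j < size s) F psi (set_nth 0 s j (a * nth 0 s j)).
Proof.
rewrite /F /=; congr (_ - _); apply: eq_bigr => j _; by rewrite size_setn.
Qed.

Lemma frob_F psi k s : size s = k.+1 -> frob psi k s = F psi s.
Proof.
elim: k s => [|k IH] [|a s] //= [Hs].
  by case: s Hs => // _; rewrite /F /= big_ord0 mulr1 subr0.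
rewrite -/(F psi (a :: s)) F_cons IH //; congr (_ - _).
rewrite Hs; apply: eq_bigr => j _; apply: IH.
by rewrite size_set_nth Hs; apply/maxn_idPr; rewrite ltn_ord.
Qed.

Lemma mask_set_nth_false (b : seq bool) (s : seq A) j x :
  size b = size s -> ~~ nth false b j -> mask b (set_nth 0 s j x) = mask b s.
Proof.
elim: s b j => [|y s IH] [|c b] j //=.
move=> [Hb]; case: j => [|j] /=; first by case: c.
by move=> Hn; rewrite IH.
Qed.

Lemma key_sum (g : seq A -> B) (a : A) (s : seq A) (b : seq bool) :
  size b = size s ->
  \sum_(j < size s | nth false b j) g (mask b (set_nth 0 s j (a * nth 0 s j)))
  = \sum_(i < size (mask b s)) g (set_nth 0 (mask b s) i (a * nth 0 (mask b s) i)).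
Proof.
elim: s b g => [|x s IH] [|c b] g //=; first by rewrite !big_ord0.
move=> [Hb].
rewrite big_mkcond big_ord_recl /=.
under eq_bigr => j _ do rewrite !add0n.
case: c => /=.
  rewrite big_ord_recl /=; congr (_ + _).
  rewrite -big_mkcond /=; exact: (IH b (fun t => g (x :: t))).
rewrite add0r -big_mkcond; exact: IH.
Qed.

Fixpoint masks (k : nat) : seq (seq bool) :=
  if k is k'.+1 then [seq true :: b | b <- masks k'] ++ [seq false :: b | b <- masks k']
  else [:: [::]].

Lemma size_masks k b : b \in masks k -> size b = k.
Proof.
elim: k b => [|k IH] b /=; first by rewrite inE => /eqP ->.
by rewrite mem_cat => /orP [] /mapP [c Hc ->] /=; rewrite IH.
Qed.

Lemma split_term (phi gam : A -> B) (s : seq A) (b : seq bool) (a : A) :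
  size b = size s ->
  \sum_(j < size s) F phi (mask b (set_nth 0 s j (a * nth 0 s j)))
                  * F gam (mask (map negb b) (set_nth 0 s j (a * nth 0 s j)))
  = (\sum_(i < size (mask b s)) F phi (set_nth 0 (mask b s) i (a * nth 0 (mask b s) i)))
       * F gam (mask (map negb b) s)
  + F phi (mask b s) *
    \sum_(i < size (mask (map negb b) s)) F gam (set_nth 0 (mask (map negb b) s) i
                          (a * nth 0 (mask (map negb b) s) i)).
Proof.
move=> Hb.
have Hnb : size (map negb b) = size s by rewrite size_map.
rewrite -key_sum // -key_sum // mulr_suml mulr_sumr.
rewrite [X in _ = X + _]big_mkcond [X in _ = _ + X]big_mkcond -big_split /=.
apply: eq_bigr => j _.
have Hj : (j < size b)%N by rewrite Hb ltn_ord.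
rewrite (nth_map false) //.
case Hbj: (nth false b j) => /=.
  by rewrite (@mask_set_nth_false (map negb b)) ?(nth_map false) ?Hbj ?addr0.
by rewrite (@mask_set_nth_false b) ?Hbj ?add0r.
Qed.

Lemma F_add (phi gam : A -> B) (s : seq A) :
  F (fun x => phi x + gam x) s
  = \sum_(b <- masks (size s)) F phi (mask b s) * F gam (mask (map negb b) s).
Proof.
suff H : forall k s, size s = k -> F (fun x => phi x + gam x) s
  = \sum_(b <- masks k) F phi (mask b s) * F gam (mask (map negb b) s).
  exact: H.
clear s.
elim=> [|k IH] [|a s] //=.
  by move=> _; rewrite big_cons big_nil addr0 mulr1.
move=> [Hs].
rewrite F_cons IH //.
rewrite (eq_bigr (fun j : 'I_(size s) => \sum_(b <- masks k) F phi (mask b (set_nth 0 s j (a * s`_j))) * F gam (mask [seq ~~ i | i <- b] (set_nth 0 s j (a * s`_j))))); last first.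
  by move=> j _; apply: IH; rewrite size_setn.
rewrite exchange_big /= big_cat !big_map /=.
rewrite mulr_sumr -sumrB -big_split /=.
rewrite big_seq [RHS]big_seq.
apply: eq_bigr => b Hb.
have Hbs : size b = size s by rewrite (size_masks Hb).
rewrite split_term // !F_cons.
set X := F phi _; set Y := F gam _; set SX := \sum_(i < _) _; set SY := \sum_(i < _) _.
rewrite mulrBl mulrBr !mulrA (mulrC X (gam a)) !mulrDl opprD addrACA.
by [].
Qed.

Lemma nhom_F n (phi : A -> B) s : is_nhom n phi -> (n < size s)%N -> F phi s = 0.
Proof.
move=> [_ [_ H]] Hs.
have := H _ (in_tuple s) Hs; rewrite /FrobMap /= frob_F //.
by rewrite prednK // (leq_ltn_trans (leq0n n) Hs).
Qed.

Lemma part1 n m (phi gam : A -> B) : is_nhom n phi -> is_nhom m gam ->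
  is_nhom (n + m) (fun x => phi x + gam x).
Proof.
move=> Hp Hg; have [Lp [p1 _]] := Hp; have [Lg [g1 _]] := Hg.
split; first by move=> c u v; rewrite Lp Lg scalerDr addrACA.
split; first by rewrite p1 g1 natrD.
move=> k t Hk; rewrite /FrobMap /= frob_F; last first.
  by rewrite size_tuple prednK // (leq_ltn_trans (leq0n _) Hk).
rewrite F_add big_seq big1 // => b Hb.
have Hbs : size b = size t by rewrite (size_masks Hb) size_tuple.
have Hnb : size (map negb b) = size t by rewrite size_map.
have Hc : (count id b + count id (map negb b))%N = size t.
  by rewrite count_map -Hbs -(count_predC id b).
case: (ltnP n (count id b)) => Hn.
  by rewrite (nhom_F Hp) ?mul0r // size_mask.
rewrite [F gam _](nhom_F Hg) ?mulr0 // size_mask //.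
rewrite size_tuple in Hc; rewrite -(ltn_add2l (count id b)) Hc.
by apply: leq_ltn_trans Hk; rewrite leq_add2r.
Qed.
End Part1.

Section Part2.
Variables (K : numFieldType) (B : comAlgType K).

Definition trunc N (f : ps B) : {poly B} := \poly_(i < N.+1) f i.
Definition u (m : nat) : B := ((m`!)%:R : K)^-1 *: 1.
Definition Ep N (P : {poly B}) : {poly B} := \sum_(m < N.+1) (u m)%:P * P ^+ m.

Lemma low_mul (R S : {poly B}) a b i :
  (forall j, (j < a)%N -> R`_j = 0) -> (forall j, (j < b)%N -> S`_j = 0) ->
  (i < a + b)%N -> (R * S)`_i = 0.
Proof.
move=> HR HS Hi; rewrite coefM big1 // => j _.
case: (ltnP j a) => Hj; first by rewrite HR ?mul0r.
rewrite HS ?mulr0 //.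
have Hji : (j <= i)%N by rewrite -ltnS ltn_ord.
rewrite ltn_subLR //; apply: leq_trans Hi _; by rewrite leq_add2r.
Qed.

Lemma low_pow (P : {poly B}) m i : P`_0 = 0 -> (i < m)%N -> (P ^+ m)`_i = 0.
Proof.
move=> P0; elim: m i => [|m IH] i //= Hi.
rewrite exprS (@low_mul _ _ 1 m) // => j; rewrite ltnS leqn0 => /eqP -> //.
Qed.

Lemma ps_pow_trunc N (f : ps B) m i : (i <= N)%N -> ps_pow f m i = (trunc N f ^+ m)`_i.
Proof.
elim: m i => [|m IH] i Hi.
  by rewrite expr0 coef1 /ps_pow /= /ps_one; case: (i == 0%N).
rewrite exprS coefM /ps_pow iterS -/(ps_pow f m) /ps_mul.
apply: eq_bigr => j _.
have Hj : (j < N.+1)%N by rewrite ltnS; apply: leq_trans Hi; rewrite -ltnS ltn_ord.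
rewrite coef_poly Hj IH //; apply: leq_trans Hi; exact: leq_subr.
Qed.

Lemma ps_exp_trunc N (f : ps B) i : f 0%N = 0 -> (i <= N)%N ->
  ps_exp f i = (Ep N (trunc N f))`_i.
Proof.
move=> f0 Hi; rewrite /Ep coef_sum /ps_exp.
rewrite (big_ord_widen N.+1 (fun m : nat => ((m`!)%:R : K)^-1 *: ps_pow f m i) (Hi : (i.+1 <= N.+1)%N)).
rewrite big_mkcond; apply: eq_bigr => m _.
rewrite coefCM -(ps_pow_trunc f m Hi).
case: ifP => Hm.
  by rewrite /u -scalerAl mul1r.
rewrite (ps_pow_trunc f m Hi) low_pow ?mulr0 //; last by rewrite ltnNge -ltnS Hm.
by rewrite coef_poly.
Qed.

Lemma sum_ind n (j : nat) (x : nat -> B) :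
  \sum_(i < n) (if (i == j :> nat) then x i else 0) = if (j < n)%N then x j else 0.
Proof.
case: ltnP => Hj.
  rewrite (bigD1 (Ordinal Hj)) //= ifT; last exact: eqxx.
  rewrite big1 ?addr0 // => i Hi.
  by rewrite ifN //; apply: contra Hi => /eqP Hij; apply/eqP/val_inj.
rewrite big1 // => i _; rewrite ifN //; apply/negP => /eqP Hij.
by move: (ltn_ord i); rewrite Hij ltnNge Hj.
Qed.

Lemma tri N (H : nat -> nat -> B) :
  \sum_(m < N.+1) \sum_(p < m.+1) H p (m - p)%N =
  \sum_(p < N.+1) \sum_(q < N.+1) (if (p + q < N.+1)%N then H p q else 0).
Proof.
transitivity (\sum_(m < N.+1) \sum_(p < N.+1) \sum_(q < N.+1)
                 (if (m == (p + q)%N :> nat) then H p q else 0)).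
  apply: eq_bigr => m _.
  rewrite (big_ord_widen N.+1 (fun p => H p (m - p)%N) (ltn_ord m)) big_mkcond.
  apply: eq_bigr => p _.
  transitivity (\sum_(q < N.+1) (if (q == (m - p)%N :> nat) then (if (p < m.+1)%N then H p q else 0) else 0)).
    have S := @sum_ind N.+1 (m - p)%N (fun q : nat => if (p < m.+1)%N then H p q else 0).
    cbv beta in S; rewrite S [in RHS]ifT //. exact: (leq_ltn_trans (leq_subr p m) (ltn_ord m)).
  apply: eq_bigr => q _.
  have E : (m == (p + q)%N :> nat) = ((p <= m)%N && (q == (m - p)%N :> nat)).
    apply/idP/andP => [/eqP Hm|[Hpm /eqP Hq]]; first by rewrite Hm leq_addr addKn.
    by rewrite Hq subnKC.
  by rewrite E ltnS; case: (p <= m)%N => //=; case: ifP.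
rewrite exchange_big; apply: eq_bigr => p _; rewrite exchange_big; apply: eq_bigr => q _.
exact: (@sum_ind N.+1 (p + q) (fun _ => H p q)).
Qed.

Lemma u_bin m p : (p <= m)%N -> u m *+ 'C(m, p) = u p * u (m - p).
Proof.
move=> Hp; rewrite /u scalerMnl -scalerAl mul1r scalerA; congr (_ *: _).
rewrite -(bin_fact Hp) -mulr_natr !natrM !invfM mulrAC mulVf ?mul1r //.
by rewrite pnatr_eq0 -lt0n bin_gt0.
Qed.

Lemma exp_add (f g : ps B) : f 0%N = 0 -> g 0%N = 0 -> forall N,
  ps_exp (fun k => f k + g k) N = ps_mul (ps_exp f) (ps_exp g) N.
Proof.
move=> f0 g0 N.
set P := trunc N f; set Q := trunc N g.
have P0 : P`_0 = 0 by rewrite coef_poly.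
have Q0 : Q`_0 = 0 by rewrite coef_poly.
have T : trunc N (fun k => f k + g k) = Q + P.
  by apply/polyP => i; rewrite coefD !coef_poly; case: ifP; rewrite ?addr0 // addrC.
rewrite (@ps_exp_trunc N) ?f0 ?g0 ?addr0 // T.
pose Hf p q := ((u p * u q)%:P * (P ^+ p * Q ^+ q))`_N.
have Hz : forall p q, (N < p + q)%N -> Hf p q = 0.
  move=> p q Hpq; rewrite /Hf coefCM (@low_mul _ _ p q) ?mulr0 //.
    by move=> j Hj; rewrite low_pow.
  by move=> j Hj; rewrite low_pow.
transitivity (\sum_(m < N.+1) \sum_(p < m.+1) Hf p (m - p)%N).
  rewrite /Ep coef_sum; apply: eq_bigr => m _.
  rewrite exprDn mulr_sumr coef_sum; apply: eq_bigr => p _.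
  have Hp : (p <= m)%N by rewrite -ltnS ltn_ord.
  by rewrite mulrnAr -mulrnAl -polyCMn u_bin // (mulrC (Q ^+ _)).
rewrite tri /ps_mul.
transitivity ((Ep N P * Ep N Q)`_N); last first.
  rewrite coefM; apply: eq_bigr => i _.
  have Hi : (i <= N)%N by rewrite -ltnS ltn_ord.
  by rewrite !(@ps_exp_trunc N) // leq_subr.
rewrite /Ep mulr_suml coef_sum; apply: eq_bigr => p _.
rewrite mulr_sumr coef_sum; apply: eq_bigr => q _.
case: ifP => Hpq.
  by rewrite /Hf polyCM mulrACA.
transitivity (Hf p q); last by rewrite /Hf polyCM mulrACA.
by rewrite Hz // ltnNge -ltnS Hpq.
Qed.
End Part2.

From Stdlib Require Import FunctionalExtensionality.

Theorem mainTheorem8 (K : numFieldType) (A B : comAlgType K)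
    (n m : nat) (phi gamma : A -> B) :
  (1 <= n)%N -> (1 <= m)%N ->
  is_nhom n phi -> is_nhom m gamma ->
  is_nhom (n + m) (fun x => phi x + gamma x) /\
  (forall a : A,
     charfun (fun x => phi x + gamma x) a
     = ps_mul (charfun phi a) (charfun gamma a)).
Proof.
move=> _ _ Hp Hg; split; first exact: part1.
move=> a; apply: functional_extensionality => N.
have Z : forall psi : A -> B, linear psi -> psi (ln1p a 0%N) = 0.
  move=> psi Lpsi; have := Lpsi (-1) 0 0.
  by rewrite /ln1p /= scaler0 addr0 scaleN1r addNr.
have [Lp _] := Hp; have [Lg _] := Hg.
rewrite /charfun.
exact: (@exp_add K B (fun k => phi (ln1p a k)) (fun k => gamma (ln1p a k)) (Z _ Lp) (Z _ Lg) N).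
Qed.
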